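(* Let $H$ be a connected graph on vertex set $\{1,\dots,r\}$ and, for each $i\in\{1,\dots,r\}$, let $G_i$ be a $d_i$-regular graph of order $n_i$ with adjacency eigenvalues $d_i=\lambda_1(A(G_i)),\lambda_2(A(G_i)),\dots,\lambda_{n_i}(A(G_i))$. Let $G=\bigvee_H\{G_i:1\le i\le r\}$ and $N_i=\sum_{j\in N_H(i)}n_j$. For $s\in\mathbb{R}$, let $M_i(s)=(s^2(d_i+N_i-1)+1)I_{n_i}-sA(G_i)$, so that $\sigma(M_i(s))=\{s^2(d_i+N_i-1)-s\lambda_k(A(G_i))+1\}_{k=1}^{n_i}$, and $\lambda_1(M_i(s))=s^2(d_i+N_i-1)-sd_i+1$. Let $F_r(s)$ be the $r\times r$ symmetric matrix with diagonal entries $(F_r(s))_{ii}=\lambda_1(M_i(s))$ and off-diagonal entries $(F_r(s))_{ij}=\delta_{ij}\sqrt{n_in_j}$, where $\delta_{ij}=-s$ if $ij\in E(H)$ and $\delta_{ij}=0$ otherwise. Then, as multisets, $$\sigma(M_G(s))=\bigcup_{i=1}^r\big(\sigma(M_i(s))-\{\lambda_1(M_i(s))\}\big)\cup\sigma(F_r(s)),$$ where $\sigma(M_i(s))-\{\lambda_1(M_i(s))\}$ denotes the multiset $\{s^2(d_i+N_i-1)-s\lambda_k(A(G_i))+1\}_{k=2}^{n_i}$.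
   Context: For a simple undirected graph $G$ on $n$ vertices with adjacency matrix $A$, diagonal degree matrix $D$ and identity $I$, and real $s$, the deformed Laplacian matrix is $M_G(s)=I-sA+s^2(D-I)$; $\sigma(\cdot)$ is the multiset of eigenvalues. $H$-join: given a graph $H$ on vertex set $\{1,\dots,r\}$ and pairwise vertex-disjoint graphs $G_1,\dots,G_r$, the graph $G=\bigvee_H\{G_i:1\le i\le r\}$ has vertex set $\bigcup_i V(G_i)$ and edge set $\bigcup_iE(G_i)\cup\bigcup_{ij\in E(H)}\{uv:u\in V(G_i),v\in V(G_j)\}$. $N_H(i)$ is the set of neighbours of $i$ in $H$. *)

(* Defs.v *)
From HB Require Import structures.
From mathcomp Require Import all_boot all_order all_algebra.
Set Implicit Arguments. Unset Strict Implicit. Unset Printing Implicit Defensive.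
Import Order.TTheory GRing.Theory Num.Theory.
Local Open Scope ring_scope.

(* Matrices indexed by the vertices use the
   canonical enumeration of T (any labelling gives similar matrices). *)
Definition simple_graph (T : finType) (e : rel T) : Prop :=
  symmetric e /\ irreflexive e.

Definition adjmx (R : nzRingType) (T : finType) (e : rel T) : 'M[R]_#|T| :=
  \matrix_(i, j) (e (enum_val i) (enum_val j))%:R.

Definition deg (T : finType) (e : rel T) (x : T) : nat := #|[pred y | e x y]|.

Definition degmx (R : nzRingType) (T : finType) (e : rel T) : 'M[R]_#|T| :=
  \matrix_(i, j) ((i == j)%:R * (deg e (enum_val i))%:R).

Definition deformed_lap (R : comNzRingType) (T : finType) (e : rel T) (s : R)
  : 'M[R]_#|T| :=
  1%:M - s *: adjmx R e + s ^+ 2 *: (degmx R e - 1%:M).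

Definition regular (T : finType) (e : rel T) (d : nat) : Prop :=
  forall x, deg e x = d.

Definition hjoin (r : nat) (n : 'I_r -> nat) (H : rel 'I_r)
  (eG : forall i : 'I_r, rel 'I_(n i)) : rel {i : 'I_r & 'I_(n i)} :=
  fun u v =>
    ((tag u == tag v) && eG (tag u) (tagged u) (tagged_as u v))
    || H (tag u) (tag v).

Definition connected (T : finType) (e : rel T) : Prop :=
  (0 < #|T|)%N /\ forall x y, connect e x y.

(* "s is the multiset of eigenvalues of M" (with algebraic multiplicity) *)
Definition is_spectrum (R : comNzRingType) (m : nat) (M : 'M[R]_m) (s : seq R)
  : Prop := char_poly M = \prod_(x <- s) ('X - x%:P).

(* Main.v *)
Require Import Defs.
From HB Require Import structures.
From mathcomp Require Import all_boot all_order all_algebra.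
From mathcomp Require Import fingroup perm.
From mathcomp Require Import ring.
Import Order.TTheory GRing.Theory Num.Theory.
Local Open Scope ring_scope.
Lemma char_poly_similar (F : fieldType) n (P A : 'M[F]_n) :
  P \in unitmx -> char_poly (P *m A *m invmx P) = char_poly A.
Proof.
move=> uP; rewrite /char_poly /char_poly_mx.
have -> : 'X%:M - map_mx polyC (P *m A *m invmx P) =
   map_mx polyC P *m ('X%:M - map_mx polyC A) *m map_mx polyC (invmx P).
  rewrite mulmxBr mulmxBl !map_mxM; congr (_ - _).
  by rewrite mul_mx_scalar -scalemxAl -map_mxM mulmxV // map_mx1 scalemx1.
rewrite !det_mulmx mulrAC -det_mulmx -map_mxM mulmxV // map_mx1 det1 mul1r.
done.
Qed.

Lemma char_poly_castmx (R : comNzRingType) m n (e : m = n) (A : 'M[R]_m) :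
  char_poly (castmx (e, e) A) = char_poly A.
Proof. by case: n / e; rewrite castmx_id. Qed.

Lemma char_poly_ublock (R : comNzRingType) p q (A : 'M[R]_p) B (C : 'M[R]_q) :
  char_poly (block_mx A B 0 C) = char_poly A * char_poly C.
Proof.
rewrite /char_poly /char_poly_mx map_block_mx (scalar_mx_block p q).
rewrite opp_block_mx add_block_mx map_mx0 oppr0 addr0 det_ublock //.
Qed.

Lemma char_poly_equitable (F : fieldType) p q (A : 'M[F]_(p + q)) (E : 'M[F]_(q, p)) :
  dlsubmx A + drsubmx A *m E = E *m (ulsubmx A + ursubmx A *m E) ->
  char_poly A = char_poly (ulsubmx A + ursubmx A *m E) *
                char_poly (drsubmx A - E *m ursubmx A).
Proof.
move=> hE.
pose S := block_mx 1%:M 0 E 1%:M : 'M[F]_(p + q).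
pose S' := block_mx 1%:M 0 (- E) 1%:M : 'M[F]_(p + q).
have SS : S' *m S = 1%:M.
  rewrite mulmx_block !mul1mx !mulmx0 !mul0mx !addr0 add0r mulNmx mulmx1 addNr.
  by rewrite -scalar_mx_block.
have uS : S' \in unitmx by case: (mulmx1_unit SS).
have iS : invmx S' = S.
  by rewrite -[invmx S']mulmx1 -SS mulmxA mulVmx // mul1mx.
rewrite -(@char_poly_similar _ _ S' A uS) iS -[A]submxK /S /S'.
rewrite !mulmx_block !mul1mx !mulmx0 !mul0mx !mulmx1 !addr0 !add0r.
rewrite ?block_mxKul ?block_mxKur ?block_mxKdl ?block_mxKdr.
have -> : (- E *m ulsubmx A + dlsubmx A) + (- E *m ursubmx A + drsubmx A) *m E = 0.
  by rewrite mulmxDl !mulNmx -mulmxA addrACA -opprD -mulmxDr hE addNr.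
by rewrite char_poly_ublock mulNmx [- (E *m _) + _]addrC.
Qed.

Lemma invmx_right (R : comUnitRingType) n (A B : 'M[R]_n) :
  A *m B = 1%:M -> invmx A = B.
Proof.
move=> AB; have [uA _] := mulmx1_unit AB.
by rewrite -[invmx A]mulmx1 -AB mulmxA mulVmx // mul1mx.
Qed.

Lemma char_poly_reindex (F : fieldType) (T : finType) (L : T -> T -> F) m
  (g : 'I_m -> T) : bijective g ->
  char_poly (\matrix_(a, b) L (g a) (g b)) =
  char_poly (\matrix_(a, b) L (enum_val a) (enum_val b) : 'M_#|T|).
Proof.
move=> bg; have e : #|T| = m by rewrite -(bij_eq_card bg) card_ord.
subst m.
have inj : injective (enum_rank \o g).
  by apply: inj_comp; [exact: enum_rank_inj | exact: bij_inj].
pose p := perm inj.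
set A := \matrix_(a, b) L (enum_val a) (enum_val b).
have -> : \matrix_(a, b) L (g a) (g b) = perm_mx p *m A *m invmx (perm_mx p).
  have -> : invmx (perm_mx p : 'M[F]_#|T|) = perm_mx p^-1%g.
    by apply: invmx_right; rewrite -perm_mxM mulgV perm_mx1.
  transitivity (col_perm p (row_perm p A)); last by rewrite col_permE row_permE.
  by apply/matrixP => a b; rewrite !mxE !permE /= !enum_rankK.
by rewrite char_poly_similar // unitmx_perm.
Qed.

Lemma char_poly_mxdiag (R : comNzRingType) r (p : 'I_r -> nat)
  (B : forall i, 'M[R]_(p i)) :
  char_poly (mxdiag B) = \prod_i char_poly (B i).
Proof.
elim: r p B => [|r IH] p B.
  rewrite [RHS]big_ord0.
  have : forall k (M : 'M[R]_k), k = 0%N -> char_poly M = 1.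
    by move=> k M e; subst k; rewrite /char_poly det_mx00.
  by apply; rewrite big_ord0.
by rewrite mxdiag_recl char_poly_castmx char_poly_ublock IH big_ord_recl.
Qed.

Lemma prod_const_seq (R : comNzRingType) (T : Type) (l : seq T) (c : R) :
  \prod_(x <- l) c = c ^+ size l.
Proof. by elim: l => [|x l IH]; rewrite ?big_nil ?big_cons ?IH ?exprS. Qed.

Lemma char_poly_affine (F : fieldType) n (A : 'M[F]_n) (lam : seq F) (a s : F) :
  char_poly A = \prod_(x <- lam) ('X - x%:P) ->
  char_poly (a%:M - s *: A) = \prod_(x <- lam) ('X - (a - s * x)%:P).
Proof.
move=> hA.
have hs : size lam = n.
  by have := size_char_poly A; rewrite hA size_prod_XsubC => -[].
case: (eqVneq s 0) => [->|s0].
  rewrite scale0r subr0 char_poly_trig ?scalar_mx_is_trig //.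
  rewrite (eq_bigr (fun _ => 'X - a%:P)); last by move=> i _; rewrite mxE eqxx mulr1n.
  under [RHS]eq_bigr do rewrite mul0r subr0.
  by rewrite prodr_const card_ord prod_const_seq hs.
pose q1 : {poly F} := a%:P - s *: 'X.
pose q2 : {poly F} := (a / s)%:P - s^-1 *: 'X.
have q12 : q1 \Po q2 = 'X.
  rewrite /q1 comp_polyB comp_polyC comp_polyZ comp_polyX /q2.
  have e : s%:P * (s^-1)%:P = 1 :> {poly F} by rewrite -polyCM divff // polyC1.
  rewrite -!mul_polyC polyCM.
  ring: e.
have inj : forall p r : {poly F}, p \Po q1 = r \Po q1 -> p = r.
  move=> p r e; rewrite -[p]comp_polyXr -[r]comp_polyXr -q12 !comp_polyA e //.
apply: inj.
have -> : char_poly (a%:M - s *: A) \Po q1 = (- s) ^+ n *: char_poly A.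
  rewrite /char_poly -mul_polyC rmorphXn -detZ -[_ \Po q1]/(comp_poly q1 _) -det_map_mx.
  congr (\det _); apply/matrixP => i j; rewrite !mxE.
  case: (i == j) => /=; rewrite ?mulr1n ?mulr0n ?subr0 ?sub0r ?polyCN ?opprK.
    rewrite comp_polyB comp_polyX comp_polyC /q1 -!mul_polyC polyCB polyCM; ring.
  rewrite comp_polyC ?polyCN ?polyCM; ring.
rewrite hA -[_ \Po q1]/(comp_poly q1 _) rmorph_prod /= -mul_polyC rmorphXn.
rewrite -hs -prod_const_seq -big_split /=; apply: eq_bigr => x _.
rewrite comp_polyB comp_polyX comp_polyC /q1 -mul_polyC polyCB polyCN polyCM.
ring.
Qed.

Lemma succ_lt {n k} : (k < n.-1)%N -> (k.+1 < n)%N.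
Proof. by case: n. Qed.

Definition zo {n} (h : (0 < n)%N) : 'I_n := Ordinal h.
Definition so {n} (k : 'I_n.-1) : 'I_n := Ordinal (@succ_lt n k (ltn_ord k)).

Definition hmap {n} (h : (0 < n)%N) (a : 'I_(1 + n.-1)) : 'I_n :=
  match split a with inl _ => zo h | inr k => so k end.

Definition gmap {r} {n : 'I_r -> nat} (h : forall i, (0 < n i)%N)
  (a : 'I_(r + \sum_i (n i).-1)) : {i : 'I_r & 'I_(n i)} :=
  match split a with
  | inl i => Tagged (fun i => 'I_(n i)) (zo (h i))
  | inr k => Tagged (fun i => 'I_(n i)) (so (tagged (tagnat.sig k)))
  end.

Lemma split_l m n (i : 'I_m) : split (lshift n i) = inl i.
Proof. exact: (unsplitK (inl _ i)). Qed.
Lemma split_r m n (i : 'I_n) : split (rshift m i) = inr i.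
Proof. exact: (unsplitK (inr _ i)). Qed.

Lemma tag_ord_eq r (p : 'I_r -> nat) (t1 t2 : {i : 'I_r & 'I_(p i)}) :
  tag t1 = tag t2 -> val (tagged t1) = val (tagged t2) -> t1 = t2.
Proof. by case: t1 t2 => i x [j y] /= e; subst j => /val_inj ->. Qed.

Lemma sum_S2 (V : nmodType) n (h : (0 < n)%N) (f : 'I_n -> V) :
  \sum_(b : 'I_n) f b = f (zo h) + \sum_(k : 'I_n.-1) f (so k).
Proof.
case: n h f => // n h f; rewrite big_ord_recl; congr (f _ + _).
  exact: val_inj.
by apply: eq_bigr => k _; congr f; apply: val_inj.
Qed.

Lemma hmap_bij n (h : (0 < n)%N) : bijective (hmap h).
Proof.
apply: inj_card_bij; last by rewrite !card_ord; case: n h.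
move=> a b; rewrite /hmap.
case: (splitP a) => [i ei|k ek]; case: (splitP b) => [j ej|l el] //=.
- by move=> _; apply: ord_inj; rewrite ei ej (ord1 i) (ord1 j).
- by move/(congr1 val) => /= [] kl; apply: ord_inj; rewrite ek el kl.
Qed.

Lemma gmap_bij {r} {n : 'I_r -> nat} (h : forall i, (0 < n i)%N) : bijective (gmap h).
Proof.
apply: inj_card_bij; last first.
  rewrite card_ord tagnat.card.
  rewrite (eq_bigr (fun i => 1 + (n i).-1)%N); last by move=> i _; case: (n i) (h i).
  by rewrite big_split /= sum1_card card_ord.
move=> a b; rewrite /gmap.
pose vt := fun t : {i : 'I_r & 'I_(n i)} => nat_of_ord (tagged t).
case: (splitP a) => [i ei|k ek]; case: (splitP b) => [j ej|l el] /=.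
- move=> e; have ij : i = j by exact: (congr1 tag e).
  by apply: ord_inj; rewrite ei ej ij.
- by move/(congr1 vt).
- by move/(congr1 vt).
- move=> e; have kl : tagnat.sig k = tagnat.sig l.
    apply: tag_ord_eq; first exact: (congr1 tag e).
    by move: (congr1 vt e) => /= [].
  by apply: ord_inj; rewrite ek el (tagnat.sig_inj kl).
Qed.

Lemma sum_sigma_tag (V : nmodType) (I : finType) (J : I -> finType)
  (G : {i : I & J i} -> V) (j : I) :
  \sum_(t | tag t == j) G t = \sum_(b : J j) G (Tagged J b).
Proof.
transitivity (\sum_(i | i == j) \sum_(b : J i) G (Tagged J b)); last by rewrite big_pred1_eq.
rewrite (sig_big_dep (fun i => i == j) (fun _ _ => true)
           (fun i (b : J i) => G (Tagged J b))) /=.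
by apply: eq_big => [[i b]|[i b] _] //=; rewrite andbT.
Qed.

Lemma sum_sigma (V : nmodType) (I : finType) (J : I -> finType)
  (G : {i : I & J i} -> V) :
  \sum_t G t = \sum_i \sum_(b : J i) G (Tagged J b).
Proof.
rewrite (sig_big_dep (fun i => true) (fun _ _ => true)
           (fun i (b : J i) => G (Tagged J b))) /=.
by apply: eq_big => [[i b]|[i b] _] //=.
Qed.

Lemma sum_S1 {r} {n : 'I_r -> nat} (h : forall i, (0 < n i)%N) (V : nmodType)
  (f : {i : 'I_r & 'I_(n i)} -> V) (j : 'I_r) :
  \sum_(k : 'I_(\sum_i (n i).-1) | tagnat.sig1 k == j) f (gmap h (rshift r k)) =
  \sum_(b : 'I_((n j).-1)) f (Tagged (fun i => 'I_(n i)) (so b)).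
Proof.
have gr : forall k, gmap h (rshift r k) =
    Tagged (fun i => 'I_(n i)) (so (tagged (tagnat.sig k))).
  move=> k; rewrite /gmap; case: splitP => [i /= ei|k' /= ek].
    by have := ltn_ord i; rewrite -ei ltnNge leq_addr.
  have kk : k = k' by apply: ord_inj; apply/eqP; rewrite -(eqn_add2l r) ek.
  by rewrite kk.
transitivity (\sum_(t : {i : 'I_r & 'I_((n i).-1)} | tag t == j)
    f (Tagged (fun i => 'I_(n i)) (so (tagged t)))); last first.
  exact: (@sum_sigma_tag V 'I_r (fun i => 'I_((n i).-1)) (fun t =>
     f (Tagged (fun i => 'I_(n i)) (so (tagged t)))) j).
transitivity (\sum_(k : 'I_(\sum_i (n i).-1) | tagnat.sig1 k == j)
    f (Tagged (fun i => 'I_(n i)) (so (tagged (@tagnat.sig r (fun i => (n i).-1) k))))).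
  by apply: eq_bigr => k _; rewrite gr.
apply: etrans (reindex tagnat.rank _) _; first exact: onW_bij tagnat.rank_bij.
by apply: eq_big => [t|t _]; rewrite /tagnat.sig1 tagnat.rankK.
Qed.

Lemma mxdiag_fun (V : nmodType) r (p : 'I_r -> nat)
  (c : {i : 'I_r & 'I_(p i)} -> {i : 'I_r & 'I_(p i)} -> V) :
  \matrix_(x, y) (if tagnat.sig1 x == tagnat.sig1 y
                  then c (tagnat.sig x) (tagnat.sig y) else 0) =
  mxdiag (fun i => \matrix_(a, b) c (Tagged (fun i => 'I_(p i)) a)
                                    (Tagged (fun i => 'I_(p i)) b)).
Proof.
apply/matrixP => x y; rewrite /mxdiag /mxblock !mxE.
rewrite (tagnat.sigE12 x) (tagnat.sigE12 y).
move: (tagnat.sig2 x) (tagnat.sig2 y); move: (tagnat.sig1 x) (tagnat.sig1 y).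
move=> i j a b; case: eqP => [e|ne]; last by rewrite mxE.
by subst j; rewrite conform_mx_id mxE.
Qed.

Lemma gmap_l {r} {n : 'I_r -> nat} (h : forall i, (0 < n i)%N) (i : 'I_r) :
  gmap h (lshift _ i) = Tagged (fun i => 'I_(n i)) (zo (h i)).
Proof.
rewrite /gmap; case: splitP => [j /= ej|k /= ek].
  by have -> : i = j by apply: ord_inj.
by have := ltn_ord i; rewrite ek ltnNge leq_addr.
Qed.

Lemma gmap_r {r} {n : 'I_r -> nat} (h : forall i, (0 < n i)%N) k :
  gmap h (rshift r k) =
  Tagged (fun i => 'I_(n i)) (so (tagged (@tagnat.sig r (fun i => (n i).-1) k))).
Proof.
rewrite /gmap; case: splitP => [i /= ei|k' /= ek].
  by have := ltn_ord i; rewrite -ei ltnNge leq_addr.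
have kk : k = k' by apply: ord_inj; apply/eqP; rewrite -(eqn_add2l r) ek.
by rewrite kk.
Qed.

Lemma hmap_l n (h : (0 < n)%N) (i : 'I_1) : hmap h (lshift _ i) = zo h.
Proof. by rewrite /hmap; case: splitP => // k /= ek; move: ek; rewrite (ord1 i). Qed.

Lemma hmap_r n (h : (0 < n)%N) (k : 'I_n.-1) : hmap h (rshift 1 k) = so k.
Proof.
rewrite /hmap; case: splitP => [i /= ei|k' /= ek].
  by have := ltn_ord i; rewrite -ei.
have kk : k = k' by apply: ord_inj; apply/eqP; rewrite -(eqn_add2l 1) ek.
by rewrite kk.
Qed.

Theorem theorem6p4 (R : rcfType) (r : nat) (H : rel 'I_r)
  (n d : 'I_r -> nat) (eG : forall i : 'I_r, rel 'I_(n i))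
  (lam : forall i : 'I_r, seq R) (s : R) :
  simple_graph H -> connected H ->
  (forall i, simple_graph (eG i)) ->
  (forall i, 0 < n i)%N ->
  (forall i, regular (eG i) (d i)) ->
  (forall i, is_spectrum (adjmx R (eG i)) (lam i)) ->
  (forall i, lam i = (d i)%:R :: behead (lam i)) ->
  let N i := (\sum_(j < r | H i j) n j)%N in
  let mu i (x : R) := s ^+ 2 * ((d i + N i)%:R - 1) - s * x + 1 in
  let F : 'M[R]_r := \matrix_(i, j)
      if i == j then mu i (d i)%:R
      else (if H i j then - s else 0) * Num.sqrt ((n i * n j)%:R) in
  forall sF : seq R, is_spectrum F sF ->
  is_spectrum (deformed_lap (hjoin H eG) s)
    (flatten [seq [seq mu i x | x <- behead (lam i)] | i <- enum 'I_r] ++ sF).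
Proof.
move=> sH cH sG hn reg hspec hlam N mu F sF hF.
set e := hjoin H eG.
have Hirr : forall i, H i i = false by move=> i; apply: (proj2 sH).
pose Lf (u v : {i : 'I_r & 'I_(n i)}) : R := (u == v)%:R - s * (e u v)%:R
   + s ^+ 2 * ((u == v)%:R * (deg e u)%:R - (u == v)%:R).
have hdl : deformed_lap e s = \matrix_(a, b) Lf (enum_val a) (enum_val b).
  by apply/matrixP => a b; rewrite !mxE /Lf (inj_eq enum_val_inj).
have hsame : forall i (a b : 'I_(n i)), e (Tagged _ a) (Tagged _ b) = eG i a b.
  by move=> i a b; rewrite /e /hjoin /= eqxx /= tagged_asE Hirr orbF.
have hdiff : forall u v, tag u != tag v -> e u v = H (tag u) (tag v).
  by move=> u v /negbTE; rewrite /e /hjoin => ->.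
have rowG : forall i (a : 'I_(n i)), (\sum_(b : 'I_(n i)) (eG i a b : nat))%N = d i.
  move=> i a; rewrite -(reg i a) /deg -sum1_card.
  by rewrite [RHS]big_mkcond; apply: eq_bigr => b _; rewrite inE; case: (eG i a b).
have hdeg : forall i (a : 'I_(n i)), deg e (Tagged _ a) = (d i + N i)%N.
  move=> i a; rewrite /deg -sum1_card big_mkcond /=.
  rewrite (@sum_sigma nat _ _ (fun t => if t \in [pred y | e (Tagged _ a) y] then 1 else 0)%N).
  rewrite (bigD1 i) //=; congr (_ + _)%N.
    rewrite -(rowG i a); apply: eq_bigr => b _; rewrite inE hsame; by case: (eG i a b).
  rewrite /N [in RHS]big_mkcond [in RHS](bigD1 i) //= Hirr add0n.
  apply: eq_bigr => j ji.
  rewrite (eq_bigr (fun _ => if H i j then 1 else 0)%N); last first.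
    by move=> b _; rewrite inE hdiff //= eq_sym.
  by case: (H i j); [rewrite sum1_card card_ord | rewrite big1].
pose c0 i : R := 1 + s ^+ 2 * ((d i + N i)%:R - 1).
have Lsame : forall i (a b : 'I_(n i)),
    Lf (Tagged _ a) (Tagged _ b) = (a == b)%:R * c0 i - s * (eG i a b)%:R.
  by move=> i a b; rewrite /Lf eq_Tagged /= hsame hdeg /c0; ring.
have Loff : forall u v, tag u != tag v -> Lf u v = - s * (H (tag u) (tag v))%:R.
  move=> u v ne; have uv : (u == v) = false.
    by apply/negbTE; apply: contra ne => /eqP ->.
  by rewrite /Lf uv hdiff //=; ring.
pose Qv (i j : 'I_r) : R := if i == j then mu j (d j)%:R
                            else - s * (H i j)%:R * (n j)%:R.
have RSf : forall u j, \sum_(b : 'I_(n j)) Lf u (Tagged _ b) = Qv (tag u) j.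
  case=> i a j /=; rewrite /Qv; case: eqP => [<-|/eqP ne].
    rewrite (eq_bigr (fun b => (a == b)%:R * c0 i - s * (eG i a b)%:R)); last first.
      by move=> b _; rewrite Lsame.
    have d1 : \sum_(b : 'I_(n i)) (a == b)%:R = 1 :> R.
      rewrite (bigD1 a) //= eqxx big1 ?addr0 // => b /negbTE.
      by rewrite eq_sym => ->.
    rewrite big_split /= -mulr_suml d1 mul1r sumrN -mulr_sumr -natr_sum rowG.
    by rewrite /mu /c0; ring.
  rewrite (eq_bigr (fun _ => - s * (H i j)%:R)); last by move=> b _; rewrite Loff.
  by rewrite sumr_const card_ord -mulr_natr; ring.
pose g := gmap hn.
pose A : 'M[R]_(r + \sum_i (n i).-1) := \matrix_(a, b) Lf (g a) (g b).
have hA : char_poly (deformed_lap e s) = char_poly A.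
  by rewrite hdl /A (@char_poly_reindex _ _ Lf _ _ (gmap_bij hn)).
pose E : 'M[R]_(\sum_i (n i).-1, r) :=
  \matrix_(k, i) (@tagnat.sig1 r (fun i => (n i).-1) k == i)%:R.
have sumE : forall (f : 'I_(\sum_i (n i).-1) -> R) i,
    \sum_k f k * (@tagnat.sig1 r (fun i => (n i).-1) k == i)%:R =
    \sum_(k | @tagnat.sig1 r (fun i => (n i).-1) k == i) f k.
  move=> f i; rewrite [RHS]big_mkcond; apply: eq_bigr => k _.
  by case: eqP; rewrite ?mulr1 ?mulr0.
have sumE' : forall (f : 'I_r -> R) k,
    \sum_j (@tagnat.sig1 r (fun i => (n i).-1) k == j)%:R * f j =
    f (@tagnat.sig1 r (fun i => (n i).-1) k).
  move=> f k; rewrite (bigD1 (tagnat.sig1 k)) //= eqxx mul1r big1 ?addr0 //.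
  by move=> j /negbTE; rewrite eq_sym => ->; rewrite mul0r.
have rowsum : forall u j,
    Lf u (g (lshift _ j)) +
    \sum_k Lf u (g (rshift r k)) * (@tagnat.sig1 r (fun i => (n i).-1) k == j)%:R
    = Qv (tag u) j.
  move=> u j; rewrite sumE /g gmap_l.
  rewrite (sum_S1 hn _ (fun t => Lf u t)) -RSf.
  by rewrite (@sum_S2 _ _ (hn j) (fun b => Lf u (Tagged _ b))).
have hcond : dlsubmx A + drsubmx A *m E = E *m (ulsubmx A + ursubmx A *m E).
  apply/matrixP => k i; rewrite !mxE.
  under (@eq_bigr R) => j _ do rewrite !mxE.
  under [RHS](@eq_bigr R) => j _ do rewrite [E _ _]mxE.
  rewrite sumE' !mxE.
  under [X in _ = _ + X](@eq_bigr R) => j _ do rewrite !mxE.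
  by rewrite !rowsum /g gmap_l gmap_r.
rewrite /is_spectrum hA (@char_poly_equitable _ _ _ A E hcond).
have hQ : ulsubmx A + ursubmx A *m E = \matrix_(i, j) Qv i j.
  apply/matrixP => i j; rewrite !mxE.
  under (@eq_bigr R) => k _ do rewrite !mxE.
  by rewrite rowsum /g gmap_l.
have sq0 : forall i, Num.sqrt (n i)%:R != 0 :> R.
  by move=> i; rewrite sqrtr_eq0 -ltNge ltr0n hn.
pose D : 'M[R]_r := diag_mx (\row_i Num.sqrt (n i)%:R).
pose D' : 'M[R]_r := diag_mx (\row_i (Num.sqrt (n i)%:R)^-1).
have DD : D *m D' = 1%:M.
  apply/matrixP => i j; rewrite mul_diag_mx !mxE.
  by case: eqP => [->|_]; rewrite ?mulr1n ?mulr0n ?mulr0 ?divff.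
have hFQ : F = D *m \matrix_(i, j) Qv i j *m invmx D.
  rewrite (@invmx_right _ _ _ _ DD); apply/matrixP => i j.
  rewrite mul_mx_diag mul_diag_mx !mxE /Qv.
  case: eqP => [<-|/eqP ne]; first by rewrite mulrAC divff // mul1r.
  rewrite natrM sqrtrM ?ler0n //.
  move: (sq0 j); set b := Num.sqrt (n j)%:R => b0.
  have hb : (n j)%:R = b ^+ 2 :> R by rewrite /b sqr_sqrtr ?ler0n.
  rewrite hb; clearbody b.
  by case: (H i j) => /=; field.
have hQF : char_poly (\matrix_(i, j) Qv i j) = char_poly F.
  have [uD _] := mulmx1_unit DD.
  by rewrite hFQ char_poly_similar.
rewrite hQ hQF.
pose cc (t1 t2 : {i : 'I_r & 'I_((n i).-1)}) : R :=
  Lf (Tagged (fun i => 'I_(n i)) (so (tagged t1)))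
     (Tagged (fun i => 'I_(n i)) (so (tagged t2)))
  - Lf (Tagged (fun i => 'I_(n i)) (zo (hn (tag t1))))
       (Tagged (fun i => 'I_(n i)) (so (tagged t2))).
have hC : drsubmx A - E *m ursubmx A =
  \matrix_(x, y) (if @tagnat.sig1 r (fun i => (n i).-1) x == tagnat.sig1 y
                  then cc (tagnat.sig x) (tagnat.sig y) else 0).
  apply/matrixP => x y; rewrite !mxE.
  under (@eq_bigr R) => j _ do rewrite [E _ _]mxE.
  rewrite sumE' !mxE /g gmap_l !gmap_r.
  case: eqP => [//|/eqP nxy].
  by rewrite !Loff //= subrr.
rewrite hC mxdiag_fun char_poly_mxdiag.
have hCi : forall i, char_poly (\matrix_(a, b)
      cc (Tagged (fun i0 : 'I_r => 'I_(n i0).-1) a)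
         (Tagged (fun i0 : 'I_r => 'I_(n i0).-1) b) : 'M[R]_((n i).-1)) =
    \prod_(x <- behead (lam i)) ('X - (mu i x)%:P).
  move=> i.
  pose Bi : 'M[R]_(1 + (n i).-1) := \matrix_(a, b)
    Lf (Tagged (fun i => 'I_(n i)) (hmap (hn i) a))
       (Tagged (fun i => 'I_(n i)) (hmap (hn i) b)).
  have h1 : char_poly Bi = \prod_(x <- lam i) ('X - (mu i x)%:P).
    rewrite /Bi (@char_poly_reindex _ _
       (fun x y => Lf (Tagged (fun i => 'I_(n i)) x) (Tagged (fun i => 'I_(n i)) y))
       _ _ (@hmap_bij _ (hn i))).
    have -> : \matrix_(a, b) Lf (Tagged (fun i => 'I_(n i)) (enum_val a))
                               (Tagged (fun i => 'I_(n i)) (enum_val b))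
              = (c0 i)%:M - s *: adjmx R (eG i).
      apply/matrixP => a b; rewrite !mxE Lsame (inj_eq enum_val_inj).
      by case: (a == b); rewrite ?mulr1n ?mulr0n; ring.
    rewrite (@char_poly_affine _ _ _ _ (c0 i) s (hspec i)).
    by apply: eq_bigr => x _; rewrite /mu /c0; congr ('X - _%:P); ring.
  have hc : dlsubmx Bi + drsubmx Bi *m const_mx 1 =
            const_mx 1 *m (ulsubmx Bi + ursubmx Bi *m const_mx 1).
    apply/matrixP => k z; rewrite !mxE big_ord1 !mxE.
    under (@eq_bigr R) => l _ do rewrite !mxE hmap_r mulr1.
    under [X in _ = _ * (_ + X)](@eq_bigr R) => l _ do rewrite !mxE hmap_r mulr1.
    rewrite !hmap_l hmap_r mul1r.
    under (@eq_bigr R) => l _ do rewrite hmap_r.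
    rewrite -(@sum_S2 _ _ (hn i) (fun b => Lf (Tagged (fun i => 'I_(n i)) (so k))
                                             (Tagged (fun i => 'I_(n i)) b))).
    rewrite -(@sum_S2 _ _ (hn i) (fun b => Lf (Tagged (fun i => 'I_(n i)) (zo (hn i)))
                                             (Tagged (fun i => 'I_(n i)) b))).
    by rewrite !RSf.
  have h2 : char_poly Bi = ('X - (mu i (d i)%:R)%:P) *
      char_poly (\matrix_(a, b)
      cc (Tagged (fun i0 : 'I_r => 'I_(n i0).-1) a)
         (Tagged (fun i0 : 'I_r => 'I_(n i0).-1) b) : 'M[R]_((n i).-1)).
    rewrite (@char_poly_equitable _ _ _ Bi _ hc); congr (_ * _).
      rewrite /char_poly det_mx11 !mxE.
      under (@eq_bigr R) => l _ do rewrite !mxE hmap_r mulr1.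
      rewrite !hmap_l eqxx mulr1n.
      rewrite -(@sum_S2 _ _ (hn i) (fun b => Lf (Tagged (fun i => 'I_(n i)) (zo (hn i)))
                                             (Tagged (fun i => 'I_(n i)) b))).
      by rewrite RSf /Qv /= eqxx.
    congr char_poly; apply/matrixP => a b.
    by rewrite !mxE big_ord1 !mxE !hmap_r hmap_l mul1r.
  move: h1; rewrite h2 {1}(hlam i) big_cons => /mulfI; apply.
  by rewrite polyXsubC_eq0.
rewrite (eq_bigr _ (fun i _ => hCi i)).
rewrite big_cat /= big_flatten /= big_map mulrC; congr (_ * _); last exact: hF.
rewrite big_enum /=; apply: eq_bigr => i _; by rewrite big_map.
Qed.
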